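(* Let $\phi$ be a Young function satisfying the $\Delta_2$-condition, $w$ a weight function, and let $l_{(\phi,w)}$ be the Orlicz-Lorentz sequence space, i.e. the Orlicz-Lorentz space $L_{(\phi,w)}$ over $(\mathbb{N},2^{\mathbb{N}},\nu)$ with $\nu$ the counting measure. Let $\Psi:\mathbb{N}\to\mathbb{N}$ induce the composition operator $C_\Psi f=f\circ\Psi$ on $l_{(\phi,w)}$. Then $\mathcal{A}(C_\Psi)=\infty$ if and only if there exists a sequence $(n_m)_{m\ge1}$ of distinct natural numbers such that $n_m\notin\Psi^m(\mathbb{N})$ but $n_m\in\Psi^{m-1}(\mathbb{N})$ for each $m\ge1$.
   Context: A Young function is a convex $\phi:[0,\infty)\to[0,\infty)$ with $\phi(x)=0\iff x=0$ and $\lim_{x\to\infty}\phi(x)=\infty$; $\Delta_2$-condition: $\phi(2x)\le k\phi(x)$ for some $k>0$ and all $x>0$. A weight function is a non-increasing locally integrable $w:(0,\infty)\to(0,\infty)$ with $\int_0^\infty w=\infty$. For $f:\mathbb{N}\to\mathbb{C}$, $\nu_f(s)=\#\{n:|f(n)|>s\}$, $f^*(t)=\inf\{s>0:\nu_f(s)\le t\}$; $l_{(\phi,w)}$ is the space of $f$ with $\int_0^\infty\phi(\alpha f^*(t))w(t)\,dt<\infty$ for some $\alpha>0$, with the Luxemburg norm. $\Psi^0=\mathrm{id}$. The ascent $\mathcal{A}(T)$ is the smallest integer $m$ with $\mathcal{N}(T^m)=\mathcal{N}(T^{m+1})$ ($\mathcal{N}$ = kernel), and $\infty$ if no such $m$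 exists. *)

(* Defs.v *)
From HB Require Import structures.
From mathcomp Require Import all_boot all_order all_algebra.
From mathcomp Require Import all_classical all_reals all_analysis.
From mathcomp Require Import complex.
Set Implicit Arguments. Unset Strict Implicit. Unset Printing Implicit Defensive.
Import Order.TTheory GRing.Theory Num.Theory.
Local Open Scope classical_set_scope.
Local Open Scope ring_scope.

Section Defs.
Variable R : realType.

(* Young function phi : [0,oo) -> [0,oo), given as a function R -> R
   whose values off [0,oo) are irrelevant. *)
Definition young_function (phi : R -> R) : Prop :=
  (forall x y t, 0 <= x -> 0 <= y -> 0 <= t <= 1 ->
     phi (t * x + (1 - t) * y) <= t * phi x + (1 - t) * phi y) /\
  (forall x, 0 <= x -> 0 <= phi x) /\
  (forall x, 0 <= x -> (phi x = 0 <-> x = 0)) /\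
  (phi x @[x --> +oo] --> +oo).

Definition delta2 (phi : R -> R) : Prop :=
  exists k : R, 0 < k /\ forall x, 0 < x -> phi (2 * x) <= k * phi x.

Definition weight_function (w : R -> R) : Prop :=
  (forall t, 0 < t -> 0 < w t) /\
  (forall s t, 0 < s -> s <= t -> w t <= w s) /\
  (forall a, 0 < a -> (@lebesgue_measure R).-integrable [set t : R | 0 < t <= a] (EFin \o w)) /\
  (\int[@lebesgue_measure R]_(t in [set t : R | (0 < t)%R]) (w t)%:E = +oo)%E.

Definition cabs (z : R[i]) : R := Normc.normc z.

(* nu_f(s) <= t, where nu_f(s) = #{n : |f n| > s} (possibly infinite) *)
Definition distr_le (f : nat -> R[i]) (s t : R) : Prop :=
  forall l : seq nat, uniq l -> all (fun n => s < cabs (f n)) l ->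
    (size l)%:R <= t.

(* decreasing rearrangement f^*(t) = inf {s > 0 : nu_f(s) <= t}, in \bar R
   (inf of the empty set is +oo) *)
Definition rearr (f : nat -> R[i]) (t : R) : \bar R :=
  ereal_inf [set s%:E | s in [set s : R | 0 < s /\ distr_le f s t]].

(* integrand  phi (alpha f^*(t)) w(t), with phi(+oo) = +oo *)
Definition ol_integrand (phi w : R -> R) (alpha : R) (f : nat -> R[i]) (t : R)
  : \bar R :=
  match rearr f t with
  | r%:E => (phi (alpha * r) * w t)%:E
  | _ => +oo%E
  end.

Definition in_l_phi_w (phi w : R -> R) (f : nat -> R[i]) : Prop :=
  exists alpha : R, 0 < alpha /\
    (\int[@lebesgue_measure R]_(t in [set t : R | (0 < t)%R]) ol_integrand phi w alpha f t
       < +oo)%E.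

Definition comp_op (Psi : nat -> nat) (f : nat -> R[i]) : nat -> R[i] :=
  f \o Psi.

Definition ker_pow (V : set (nat -> R[i])) (T : (nat -> R[i]) -> nat -> R[i])
  (m : nat) : set (nat -> R[i]) :=
  [set f | V f /\ iter m T f = (fun _ => 0)].

Definition ascent_infinite (V : set (nat -> R[i]))
  (T : (nat -> R[i]) -> nat -> R[i]) : Prop :=
  ~ (exists m : nat, ker_pow V T m = ker_pow V T m.+1).

End Defs.

(* Main.v *)
Require Import Defs.
From HB Require Import structures.
From mathcomp Require Import all_boot all_order all_algebra.
From mathcomp Require Import all_classical all_reals all_analysis.
From mathcomp Require Import complex.
Import Order.TTheory GRing.Theory Num.Theory.
Local Open Scope classical_set_scope.
Local Open Scope ring_scope.

Section S.
Variable R : realType.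
Definition delta (n : nat) : nat -> R[i] := fun k => if k == n then 1 else 0.

Lemma cabs_delta n k : cabs (delta n k) = if k == n then 1 else 0.
Proof.
rewrite /delta /cabs; case: (k == n) => /=; rewrite /Normc.normc /=.
  by rewrite expr1n expr0n /= addr0 sqrtr1.
by rewrite expr0n /= addr0 sqrtr0.
Qed.

Lemma uniq_all1 (l : seq nat) n : uniq l -> all (pred1 n) l -> (size l <= 1)%N.
Proof.
move=> ul al; have -> : 1%N = size [:: n] by [].
apply: uniq_leq_size => // x xl; move/allP: al => /(_ x xl) /= /eqP ->.
by rewrite mem_seq1.
Qed.

Lemma distr_delta n s t : 0 < s -> 0 < t -> distr_le (delta n) s t <-> ((1 <= s) \/ (1 <= t)).
Proof.
move=> s0 t0; split.
  move=> H; case: (lerP 1 s) => [|s1]; first by left.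
  right; have := H [:: n] isT; rewrite /= cabs_delta eqxx s1 /=; exact.
move=> H l ul al.
have : (size l <= 1)%N.
  apply: (@uniq_all1 _ n ul); apply/allP => x xl.
  move/allP: al => /(_ x xl).
  rewrite cabs_delta /=; case: (x == n) => //.
  by rewrite ltNge ltW.
case: H => [s1|t1].
  case: l ul al => [|x l] /= _; first by rewrite ltW.
  move/andP=> [] ; rewrite cabs_delta; case: (x == n) => /=.
    by rewrite ltNge s1.
  by rewrite ltNge ltW.
by rewrite leq_eqVlt ltnS leqn0 => /orP[] /eqP -> //; rewrite ltW.
Qed.

Lemma rearr_ge1 n t : 1 <= t -> rearr (delta n) t = 0%E.
Proof.
move=> t1; have t0 : 0 < t by apply: lt_le_trans t1.
apply: le_anti; apply/andP; split.
  apply/lee_addgt0Pr => e e0; rewrite add0e; apply: ereal_inf_lbound.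
  by exists e => //; split => //; apply/distr_delta => //; right.
apply: le_ereal_inf_tmp => x [s [s0 _] <-]; rewrite lee_fin; exact: ltW.
Qed.

Lemma rearr_lt1 n t : 0 < t -> t < 1 -> rearr (delta n) t = 1%E.
Proof.
move=> t0 t1; apply: le_anti; apply/andP; split.
  apply: ereal_inf_lbound.
  by exists 1 => //; split => //; apply/distr_delta => //; left.
apply: le_ereal_inf_tmp => x [s [s0 /(@distr_delta n s t s0 t0)] [s1|t1'] <-].
  by rewrite lee_fin.
by move: t1; rewrite ltNge t1'.
Qed.

Lemma ol_delta phi w n t : phi 0 = 0 -> 0 < t ->
  ol_integrand phi w 1 (delta n) t =
  ((fun t => (phi 1)%:E * (w t)%:E)%E \_ [set t : R | 0 < t < 1]) t.
Proof.
move=> p0 t0; rewrite /ol_integrand /patch.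
case: (ltP t 1) => t1.
  rewrite rearr_lt1 // mulr1.
  have -> : (t \in [set t : R | 0 < t < 1]) = true.
    by apply/asboolP; rewrite /= t0 t1.
  by [].
rewrite rearr_ge1 //= mulr0 p0 mul0r.
by case: ifPn => // /asboolP /= /andP[_]; rewrite ltNge t1.
Qed.

Lemma measE : measurable [set t : R | 0 < t < 1].
Proof.
have -> : [set t : R | 0 < t < 1] = `]0, 1[%classic.
  by apply/seteqP; split => x /=; rewrite in_itv.
exact: measurable_itv.
Qed.

Lemma measE1 : measurable [set t : R | 0 < t <= 1].
Proof.
have -> : [set t : R | 0 < t <= 1] = `]0, 1]%classic.
  by apply/seteqP; split => x /=; rewrite in_itv.
exact: measurable_itv.
Qed.

Lemma delta_in phi w n : young_function phi -> weight_function w ->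
  in_l_phi_w phi w (delta n).
Proof.
move=> [_ [_ [p0 _]]] [_ [_ [wi _]]].
have p00 : phi 0 = 0 by apply/(p0 0).
exists 1; split => //.
under eq_integral => t /[!inE] t0 do rewrite ol_delta //.
rewrite -integral_mkcondr setIidr; last by move=> t /= /andP[].
apply: integrable_lty; first exact: measE.
have sub : [set t : R | 0 < t < 1] `<=` [set t : R | 0 < t <= 1].
  by move=> t /= /andP[-> /ltW].
have H : (@lebesgue_measure R).-integrable [set t : R | 0 < t < 1] (EFin \o w).
  refine (@integrableS _ _ _ (@lebesgue_measure R) _ _ _ _ _ sub (wi 1 ltr01)).
    have -> : [set t : R | 0 < t <= 1] = `]0, 1]%classic.
      by apply/seteqP; split => x /=; rewrite in_itv.
    exact: measurable_itv.
  have -> : [set t : R | 0 < t < 1] = `]0, 1[%classic.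
    by apply/seteqP; split => x /=; rewrite in_itv.
  exact: measurable_itv.
apply: (integrableZl _ (phi 1) H).
have -> : [set t : R | 0 < t < 1] = `]0, 1[%classic.
  by apply/seteqP; split => x /=; rewrite in_itv.
exact: measurable_itv.
Qed.

Lemma iter_comp (Psi : nat -> nat) m (f : nat -> R[i]) :
  iter m (comp_op Psi) f = fun k => f (iter m Psi k).
Proof.
elim: m => [|m IH] //=; rewrite IH /comp_op; apply: funext => k /=.
by rewrite -iterSr.
Qed.

Lemma ker_powE (V : set (nat -> R[i])) Psi m (f : nat -> R[i]) :
  ker_pow V (comp_op Psi) m f <-> V f /\ forall k, f (iter m Psi k) = 0.
Proof.
rewrite /ker_pow /= iter_comp; split => -[Vf H]; split => //.
  by move=> k; have := congr1 (fun g => g k) H.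
by apply: funext => k; apply: H.
Qed.
End S.

Theorem theorem3p10 (R : realType) (phi w : R -> R) (Psi : nat -> nat) :
  young_function phi -> delta2 phi -> weight_function w ->
  (forall f : nat -> R[i], in_l_phi_w phi w f ->
     in_l_phi_w phi w (comp_op Psi f)) ->
  (ascent_infinite (in_l_phi_w phi w) (comp_op Psi) <->
   exists n : nat -> nat,
     (forall i j, (1 <= i)%N -> (1 <= j)%N -> n i = n j -> i = j) /\
     (forall m, (1 <= m)%N ->
        ~ range (iter m Psi) (n m) /\ range (iter m.-1 Psi) (n m))).
Proof.
move=> yp _ wf _; split.
- move=> Hasc.
  have ex : forall m, exists y, (1 <= m)%N ->
      ~ range (iter m Psi) y /\ range (iter m.-1 Psi) y.
    case=> [|m]; first by exists 0%N.
    have neq : ker_pow (in_l_phi_w phi w) (comp_op Psi) m <>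
               ker_pow (in_l_phi_w phi w) (comp_op Psi) m.+1.
      by move=> E; apply: Hasc; exists m.
    have : ~ (ker_pow (in_l_phi_w phi w) (comp_op Psi) m.+1 `<=`
              ker_pow (in_l_phi_w phi w) (comp_op Psi) m).
      move=> sub; apply: neq; apply/seteqP; split => // f.
      move/ker_powE => [Vf Hf]; apply/ker_powE; split => // k.
      by rewrite iterSr; exact: Hf.
    move=> /existsNP [f /not_implyP [/ker_powE [Vf Hf1] Hf2]].
    have [k Hk] : exists k, f (iter m Psi k) <> 0.
      case: (pselect (forall k, f (iter m Psi k) = 0)) => [H|].
        by exfalso; apply: Hf2; apply/ker_powE.
      by move/existsNP.
    exists (iter m Psi k) => _; split; last by exists k.
    by move=> [y _ Hy]; apply: Hk; rewrite -Hy; exact: Hf1.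
  have [n Hn] := choice ex.
  exists n; split; last by move=> m /Hn.
  have key : forall i j, (1 <= i)%N -> (i < j)%N -> n i <> n j.
    move=> i j i1 ij e.
    have [Hi _] := Hn i i1.
    have [_ [y _ Hy]] := Hn j (leq_trans i1 (ltnW ij)).
    apply: Hi; exists (iter (j.-1 - i) Psi y) => //.
    rewrite -iterD addnC subnK ?Hy ?e //.
    by case: j ij {Hy e} => // j; rewrite ltnS.
  move=> i j i1 j1 e; case: (ltngtP i j) => // ij; exfalso.
    exact: (key i j i1 ij e).
  exact: (key j i j1 ij (esym e)).
- move=> [n [_ Hn]] [m E].
  have [Hn1 [y _ Hy]] := Hn m.+1 isT.
  have Hf : ker_pow (in_l_phi_w phi w) (comp_op Psi) m.+1 (delta R (n m.+1)).
    apply/ker_powE; split; first exact: delta_in.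
    move=> k; rewrite /delta; case: eqP => // e; exfalso; apply: Hn1.
    by exists k.
  rewrite -E in Hf; move/ker_powE: Hf => [_ /(_ y)].
  rewrite /= in Hy; rewrite Hy /delta eqxx => /eqP; rewrite oner_eq0.
by [].
Qed.
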